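(* Let $\mathbb{X}=\{p_1,\dots,p_n\}\subseteq\mathbb{P}^{k-1}$ with $n\ge2$, let $L\in P_1$ vanish at no point of $\mathbb{X}$, for each $i$ let $v_i=(p_{i1},\dots,p_{ik})\in\mathbb{F}_q^k$ be the coordinate vector of $p_i$ with $L(v_i)=1$, and let $\widehat{\mathfrak{J}}_{\mathbb{X}}\subseteq P$ be the preimage of the canonical ideal $\mathfrak{J}_{R/\mathbb{F}_q[\ell]}$. Then: (a) $(\widehat{\mathfrak{J}}_{\mathbb{X}})_{2r_{\mathbb{X}}-1}=\{g\in P_{2r_{\mathbb{X}}-1}: g(v_1)+\cdots+g(v_n)=0\}$; (b) the element $\Phi_{\mathbb{X}}=\sum_{\alpha\in\mathbb{N}^k,\,|\alpha|=2r_{\mathbb{X}}-1}\Big(\sum_{i=1}^np_{i1}^{\alpha_1}\cdots p_{ik}^{\alpha_k}\Big)\pi^{[\alpha]}\in\mathcal{D}_{-(2r_{\mathbb{X}}-1)}$ (i.e. the functional $g\mapsto\sum_ig(v_i)$ on $P_{2r_{\mathbb{X}}-1}$) is nonzero and generates the Macaulay inverse system of $\widehat{\mathfrak{J}}_{\mathbb{X}}$: $(\widehat{\mathfrak{J}}_{\mathbb{X}})^\perp=P\circ\Phi_{\mathbb{X}}$.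
   Context: $P=\mathbb{F}_q[x_1,\dots,x_k]$ standard graded; $\mathbb{X}$ a set of $n$ distinct $\mathbb{F}_q$-rational points of $\mathbb{P}^{k-1}$, $I_{\mathbb{X}}$ its vanishing ideal, $R=P/I_{\mathbb{X}}$, $r_{\mathbb{X}}=\min\{i\ge0:\dim R_i=n\}$; $\ell$ the class of $L$ in $R$. With $f(p_j)=f(v_j)$, the separators are the unique $f_1,\dots,f_n\in R_{r_{\mathbb{X}}}$ with $f_i(p_j)=\delta_{ij}$, and the canonical ideal is $\mathfrak{J}_{R/\mathbb{F}_q[\ell]}=\{\sum_i\varphi(f_i)f_i:\varphi\in\mathrm{Hom}_{\mathbb{F}_q[\ell]}(R,\mathbb{F}_q[\ell])\}\subseteq R$. $\mathcal{D}=\bigoplus_{j\ge0}\mathrm{Hom}_{\mathbb{F}_q}(P_j,\mathbb{F}_q)$ with $\mathcal{D}_{-j}=\mathrm{Hom}(P_j,\mathbb{F}_q)$ and basis $\pi^{[\beta]}$ dual to the monomials, $\pi^{[\beta]}(x^\alpha)=\delta_{\alpha\beta}$. $P$ acts by contraction: for $f\in P_d$, $\psi\in\mathcal{D}_{-j}$, $(f\circ\psi)(g)=\psi(fg)$ for $g\in P_{j-d}$. For a homogeneous ideal $J$, $J^\perp=\{\psi\in\mathcal{D}:f\circ\psi=0\ \forall f\in J\}$, and $P\circ\Phi$ is the submodule generated by $\Phi$. *)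

(* Defs.v *)
From HB Require Import structures.
From mathcomp Require Import all_boot all_order all_algebra all_field.
From mathcomp Require Import mpoly.
Set Implicit Arguments. Unset Strict Implicit. Unset Printing Implicit Defensive.
Import GRing.Theory.
Local Open Scope ring_scope.

Section Defs.
Variables (F : finFieldType) (k n : nat).
Implicit Types (f g : {mpoly F[k]}) (v : 'I_n -> 'I_k -> F).

Definition hcomp (d : nat) f : {mpoly F[k]} := pihomog mdeg d f.

(* The homogeneous vanishing ideal I_X of the points v_1..v_n (projective
   points p_i with representatives v_i): f \in I_X iff every homogeneous
   component of f vanishes at every v_i. *)
Definition in_IX v f : Prop := forall (d : nat) (i : 'I_n), (hcomp d f).@[v i] = 0.

(* dim R_d = n, where R_d = P_d / (I_X)_d ; since (I_X)_d is the kernel of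
   the evaluation map P_d -> F^n, g |-> (g(v_i))_i, dim R_d = n iff this
   map is onto. *)
Definition dimR_full v (d : nat) : Prop :=
  forall w : 'I_n -> F, exists2 g : {mpoly F[k]}, g \is d.-homog &
    forall j, g.@[v j] = w j.

(* Evaluation of a univariate polynomial (in F[t]) at L in P:
   the isomorphism F[t] ~ F[l] composed with a lift to P. *)
Definition evalL (L : {mpoly F[k]}) (p : {poly F}) : {mpoly F[k]} :=
  \sum_(j < size p) p`_j *: L ^+ j.

(* psi : P -> F[t] represents an F[l]-linear map phi : R -> F[l]
   (composed with P ->> R, and with F[l] ~ F[t], t |-> l). *)
Definition is_FlHom v (L : {mpoly F[k]}) (psi : {mpoly F[k]} -> {poly F}) : Prop :=
  [/\ forall f g, psi (f + g) = psi f + psi g,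
      forall (c : F) f, psi (c *: f) = c *: psi f,
      forall f, psi (L * f) = 'X * psi f
    & forall f, in_IX v f -> psi f = 0].

(* The preimage in P of the canonical ideal
   { sum_i phi(f_i) f_i : phi in Hom_{F[l]}(R, F[l]) }, where sep i is a
   representative in P of the separator f_i. *)
Definition in_Jhat v (L : {mpoly F[k]}) (sep : 'I_n -> {mpoly F[k]}) g : Prop :=
  exists2 psi, is_FlHom v L psi &
    in_IX v (g - \sum_(i < n) evalL L (psi (sep i)) * sep i).

(* The divided-power / dual module D = (+)_j Hom(P_j, F), an element being
   given by its values on monomials (psi(x^beta) = coefficient of pi^[beta]),
   with finite support. *)
Definition inD (psi : 'X_{1..k} -> F) : Prop :=
  exists s : seq 'X_{1..k}, forall m, psi m != 0 -> m \in s.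

(* Contraction f o psi : (f o psi)(x^beta) = psi(f x^beta). *)
Definition contract f (psi : 'X_{1..k} -> F) : 'X_{1..k} -> F :=
  fun beta => \sum_(a <- msupp f) f@_a * psi (a + beta)%MM.

Definition PhiX v (d : nat) : 'X_{1..k} -> F :=
  fun alpha => if mdeg alpha == d then \sum_(i < n) ('X_[alpha]).@[v i] else 0.

End Defs.

(* Main.v *)
Require Import Defs.
Set Implicit Arguments. Unset Strict Implicit. Unset Printing Implicit Defensive.
From HB Require Import structures.
From mathcomp Require Import all_boot all_order all_algebra all_field.
From mathcomp Require Import mpoly.
From mathcomp Require Import zify.
From mathcomp Require ssrcomplements.
From Stdlib Require Import Lia.
Import GRing.Theory.
Local Open Scope ring_scope.

Lemma LAm (F : fieldType) p q (A : 'M[F]_(p,q)) (u : 'rV[F]_q) :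
  (forall c : 'rV_q, c *m A^T = 0 -> c *m u^T = 0) -> exists w : 'rV_p, u = w *m A.
Proof.
move=> H; suff /submxP [w ->] : (u <= A)%MS by exists w.
rewrite submxE; apply/eqP/matrixP => i j; rewrite !mxE.
set C := cokermx A.
have hA := mulmx_coker A.
have hc : \row_l C l j *m A^T = 0.
  apply/matrixP => a b; rewrite !mxE; have := congr1 (fun M : 'M[F]_(p, q) => M b j) hA.
  rewrite !mxE => e; rewrite -[RHS]e; apply: eq_bigr => l _; by rewrite !mxE mulrC.
have /matrixP /(_ 0 0) := H _ hc.
rewrite !mxE (ord1 i) => e; rewrite -[RHS]e; apply: eq_bigr => l _.
by rewrite !mxE mulrC.
Qed.

Lemma sum_rank (F : fieldType) (J : finType) (f : J -> F) :
  \sum_(j : J) f j = \sum_(b < #|J|) f (enum_val b).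
Proof.
rewrite (reindex enum_rank); last by apply: onW_bij; apply: enum_rank_bij.
by apply: eq_bigr => j _; rewrite enum_rankK.
Qed.

Lemma LAf (F : fieldType) (I J : finType) (A : I -> J -> F) (u : J -> F) :
  (forall c : J -> F, (forall i, \sum_j c j * A i j = 0) -> \sum_j c j * u j = 0) ->
  exists w : I -> F, forall j, u j = \sum_i w i * A i j.
Proof.
move=> H.
pose A' : 'M[F]_(#|I|, #|J|) := \matrix_(a, b) A (enum_val a) (enum_val b).
pose u' : 'rV[F]_#|J| := \row_b u (enum_val b).
have [w hw] : exists w : 'rV_#|I|, u' = w *m A'.
  apply: LAm.
  move=> c hc; apply/matrixP => a b; rewrite (ord1 a) (ord1 b) !mxE.
  have hc' : forall i, \sum_j c 0 (enum_rank j) * A i j = 0.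
    move=> i; have /matrixP /(_ 0 (enum_rank i)) := hc; rewrite !mxE => e.
    rewrite sum_rank -[RHS]e; apply: eq_bigr => l _.
    by rewrite !mxE enum_valK enum_rankK.
  have := H _ hc'.
  rewrite sum_rank => e; rewrite -[RHS]e; apply: eq_bigr => l _.
  by rewrite !mxE enum_valK.
exists (fun i => w 0 (enum_rank i)) => j.
have /matrixP /(_ 0 (enum_rank j)) := hw; rewrite !mxE enum_rankK => ->.
rewrite [RHS]sum_rank; apply: eq_bigr => l _; by rewrite !mxE enum_valK enum_rankK.
Qed.

Section G.
Variables (F : finFieldType) (k : nat).
Implicit Types (f g p : {mpoly F[k]}) (w : 'I_k -> F).

Definition G w f : {poly F} := mmap (@polyC F) (fun j => (w j)%:P * 'X) f.

Lemma GD w f g : G w (f + g) = G w f + G w g.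
Proof. by rewrite /G rmorphD. Qed.
Lemma GM w f g : G w (f * g) = G w f * G w g.
Proof. by rewrite /G rmorphM. Qed.
Lemma GB w f g : G w (f - g) = G w f - G w g.
Proof. by rewrite /G rmorphB. Qed.
Lemma G0 w : G w 0 = 0.
Proof. by rewrite /G rmorph0. Qed.
Lemma G1 w : G w 1 = 1.
Proof. by rewrite /G rmorph1. Qed.
Lemma GXn w f j : G w (f ^+ j) = G w f ^+ j.
Proof. by rewrite /G rmorphXn. Qed.
Lemma GZ w c f : G w (c *: f) = c *: G w f.
Proof. by rewrite /G mmapZ mul_polyC. Qed.
Lemma G_sum w (I : Type) (s : seq I) (P : pred I) (h : I -> {mpoly F[k]}) :
  G w (\sum_(i <- s | P i) h i) = \sum_(i <- s | P i) G w (h i).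
Proof. by rewrite /G rmorph_sum. Qed.

Lemma GE w f : G w f = \sum_(m <- msupp f) (f@_m * ('X_[m]).@[w]) *: 'X^(mdeg m).
Proof.
rewrite /G /mmap; apply: eq_bigr => m _.
rewrite /mmap1 mevalX mdegE.
rewrite (eq_bigr (fun i => (w i ^+ m i)%:P * 'X^(m i))); last first.
  by move=> i _; rewrite exprMn rmorphXn.
rewrite big_split /= -rmorph_prod prodrXr -mul_polyC mulrA -rmorphM.
by rewrite mul_polyC.
Qed.

Lemma coefGE w f d : (G w f)`_d =
  \sum_(m <- msupp f) f@_m * ('X_[m]).@[w] * (mdeg m == d)%:R.
Proof.
rewrite GE coef_sum; apply: eq_bigr => m _.
by rewrite coefZ coefXn eq_sym.
Qed.

Lemma coefG w f d : (G w f)`_d = (pihomog mdeg d f).@[w].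
Proof.
rewrite coefGE pihomogE rmorph_sum /= [RHS]big_mkcond /=.
apply: eq_bigr => m _.
by case: (mdeg m == d); rewrite ?mulr1 ?mulr0 ?mevalZ.
Qed.

Lemma G_homog w p d : p \is d.-homog -> G w p = (p.@[w])%:P * 'X^d.
Proof.
move/dhomogP => hp; rewrite GE mevalE rmorph_sum /= mulr_suml big_seq [RHS]big_seq.
apply: eq_bigr => m hm; rewrite hp // mul_polyC mevalX //.
Qed.

Lemma coefG0 w f : (G w f)`_0 = \sum_(m <- msupp f) f@_m * (m == 0%MM)%:R.
Proof.
rewrite coefGE; apply: eq_bigr => m _; rewrite mdeg_eq0.
have [->|_] := eqVneq m 0%MM; last by rewrite !mulr0.
by rewrite mpolyX0 meval1 !mulr1.
Qed.

Lemma homog0_const p w1 w2 : p \is 0.-homog -> p.@[w1] = p.@[w2].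
Proof.
move=> hp; have := coefG0 w1 p; rewrite -(coefG0 w2 p) (G_homog w1 hp) (G_homog w2 hp).
by rewrite !expr0 !mulr1 !coefC.
Qed.


Section Main.
Variables (n : nat) (v : 'I_n -> 'I_k -> F) (L : {mpoly F[k]}) (r : nat)
  (sep : 'I_n -> {mpoly F[k]}).
Hypothesis hL : L \is 1.-homog.
Hypothesis hLv : forall i, L.@[v i] = 1.
Hypothesis hsep : forall i, sep i \is r.-homog.
Hypothesis hsepv : forall i j, (sep i).@[v j] = (i == j)%:R.

Lemma in_IX_G f : in_IX v f <-> forall i, G (v i) f = 0.
Proof.
split=> [h i|h d i]; first by apply/polyP => d; rewrite coefG h coef0.
by rewrite -coefG h coef0.
Qed.

Lemma GL i : G (v i) L = 'X.
Proof. by rewrite (G_homog _ hL) hLv mul1r expr1. Qed.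

Lemma Gsep i j : G (v j) (sep i) = (i == j)%:R *: 'X^r.
Proof. by rewrite (G_homog _ (hsep i)) hsepv mul_polyC. Qed.

Lemma G_evalL i (q : {poly F}) : G (v i) (evalL L q) = q.
Proof.
rewrite /evalL G_sum -[RHS]coefK poly_def; apply: eq_bigr => j _.
by rewrite GZ GXn GL.
Qed.

Lemma meval_LX i a f : (L ^+ a * f).@[v i] = f.@[v i].
Proof. by rewrite mevalM rmorphXn /= hLv expr1n mul1r. Qed.

Lemma homogLX a d f : f \is d.-homog -> L ^+ a * f \is (a + d).-homog.
Proof.
move=> hf; have := dhomogM (dhomogMn a hL) hf; by rewrite mul1n.
Qed.

Lemma dimR_up d e : dimR_full v d -> (d <= e)%N -> dimR_full v e.
Proof.
move=> hd de w; have [g hg gw] := hd w; exists (L ^+ (e - d) * g).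
  by rewrite -{2}(subnK de); apply: homogLX.
by move=> j; rewrite meval_LX.
Qed.

Section FlHom.
Variable psi : {mpoly F[k]} -> {poly F}.
Hypothesis hpsi : is_FlHom v L psi.

Lemma psiD f g : psi (f + g) = psi f + psi g.
Proof. by case: hpsi. Qed.
Lemma psiZ c f : psi (c *: f) = c *: psi f.
Proof. by case: hpsi. Qed.
Lemma psiL f : psi (L * f) = 'X * psi f.
Proof. by case: hpsi. Qed.
Lemma psiIX f : in_IX v f -> psi f = 0.
Proof. by case: hpsi => _ _ _; apply. Qed.
Lemma psi0 : psi 0 = 0.
Proof. by have := psiD 0 0; rewrite addr0 => /eqP; rewrite -subr_eq0 opprD addrA subrr add0r oppr_eq0 => /eqP. Qed.
Lemma psi_sum (h : 'I_n -> {mpoly F[k]}) : psi (\sum_i h i) = \sum_i psi (h i).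
Proof. exact: (big_morph psi psiD psi0). Qed.
Lemma psiLX a f : psi (L ^+ a * f) = 'X^a * psi f.
Proof.
elim: a => [|a IH]; first by rewrite !expr0 !mul1r.
by rewrite exprS -mulrA psiL IH mulrA -exprS.
Qed.

Lemma psi_homr z : z \is r.-homog -> psi z = \sum_i z.@[v i] *: psi (sep i).
Proof.
move=> hz.
have h0 : in_IX v (z - \sum_i z.@[v i] *: sep i).
  apply/in_IX_G => j; rewrite GB G_sum (G_homog _ hz).
  rewrite (bigD1 j) //= big1 => [|i /negbTE nij]; last by rewrite GZ Gsep nij scale0r scaler0.
  by rewrite GZ Gsep eqxx scale1r addr0 mul_polyC subrr.
have := psiIX h0; set S := \sum_i _ *: _ => h1.
have -> : psi z = psi (z - S) + psi S by rewrite -psiD subrK.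
rewrite h1 add0r /S psi_sum; apply: eq_bigr => i _; by rewrite psiZ.
Qed.

Lemma KEY u d : (d < r)%N ->
  \sum_i (G (v i) u)`_d * (psi (sep i))`_(r.-1 - d) = 0.
Proof.
move=> dr; set ud := pihomog mdeg d u.
have hud : ud \is d.-homog by apply: pihomogP.
have hw : L ^+ (r - d) * ud \is r.-homog by rewrite -{2}(subnK (ltnW dr)); apply: homogLX.
have := congr1 (fun q : {poly F} => q`_(r.-1 - d)) (psi_homr hw); rewrite /= psiLX.
rewrite coefXnM ifT; last by apply/ltP; lia.
rewrite coef_sum => e; rewrite [RHS]e; apply: eq_bigr => i _.
by rewrite coefZ meval_LX coefG.
Qed.
End FlHom.

Lemma Jhat_G g psi : is_FlHom v L psi ->
  in_IX v (g - \sum_(i < n) evalL L (psi (sep i)) * sep i) ->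
  forall i, G (v i) g = psi (sep i) * 'X^r.
Proof.
move=> hpsi /in_IX_G h i; have /eqP := h i; rewrite GB subr_eq0 => /eqP ->.
rewrite G_sum (bigD1 i) //= big1 => [|j /negbTE nji].
  by rewrite GM G_evalL Gsep eqxx scale1r addr0.
by rewrite GM Gsep nji scale0r mulr0.
Qed.

Lemma drop_X s (q : {poly F}) : (0 < s)%N ->
  drop_poly s ('X * q) = 'X * drop_poly s q + (q`_s.-1)%:P.
Proof.
move=> s0; apply/polyP => i; rewrite coefD coefC !coef_drop_poly !coefXM.
case: i => [|i] /=; rewrite ?add0n ?add0r ?addr0; first by case: s s0.
by rewrite coef_drop_poly.
Qed.

Lemma CONS (x : 'I_n -> F) s o g : (s <= r)%N ->
  (forall f, (0 < s)%N -> \sum_i x i * (G (v i) f)`_(s.-1) = 0) ->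
  g \is (2 * r - s + o).-homog -> (forall i, g.@[v i] = x i) ->
  in_Jhat v L sep g.
Proof.
move=> sr hx hg gx.
pose psi f := 'X^o * \sum_i x i *: drop_poly s (G (v i) f).
have hpsi : is_FlHom v L psi.
  split.
  - move=> f1 f2; rewrite /psi -mulrDr -big_split /=; congr (_ * _).
    by apply: eq_bigr => i _; rewrite GD drop_polyD scalerDr.
  - move=> c f; rewrite /psi scalerAr scaler_sumr; congr (_ * _).
    apply: eq_bigr => i _; rewrite GZ drop_polyZ !scalerA mulrC //.
  - move=> f; rewrite /psi mulrCA; congr (_ * _).
    case: (posnP s) => [->|s0].
      rewrite mulr_sumr; apply: eq_bigr => i _.
      by rewrite !drop_poly0l GM GL scalerAr.
    under eq_bigr do rewrite GM GL drop_X // scalerDr.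
    rewrite big_split /= mulr_sumr.
    under [X in _ = X]eq_bigr do rewrite -scalerAr.
    rewrite [X in _ + X = _](_ : _ = 0) ?addr0 //.
    under eq_bigr do rewrite -mul_polyC -rmorphM.
    by rewrite -rmorph_sum /= hx // rmorph0.
  - move=> f /in_IX_G h; rewrite /psi big1 ?mulr0 // => i _.
    by rewrite h drop_poly0r scaler0.
exists psi => //; apply/in_IX_G => j.
rewrite GB G_sum (bigD1 j) //= big1 => [|i /negbTE nij]; last first.
  by rewrite GM Gsep nij scale0r mulr0.
rewrite addr0 GM G_evalL Gsep eqxx scale1r (G_homog _ hg) gx.
have -> : psi (sep j) = x j *: 'X^(o + (r - s)).
  rewrite /psi (bigD1 j) //= big1 => [|i /negbTE nij]; last first.
    by rewrite Gsep eq_sym nij scale0r drop_poly0r scaler0.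
  rewrite addr0 Gsep eqxx scale1r -[X in drop_poly _ X]mul1r drop_polyMXn.
  rewrite (_ : s - r = 0)%N; last by apply/eqP; rewrite subn_eq0.
  by rewrite drop_poly0l mul1r -scalerAr exprD.
rewrite -scalerAl -exprD mul_polyC.
have -> : (o + (r - s) + r = 2 * r - s + o)%N by lia.
by rewrite subrr.
Qed.

Local Notation D := (2 * r).-1.
Definition Lam (g : {mpoly F[k]}) : F := \sum_i (G (v i) g)`_D.

Lemma LamD f g : Lam (f + g) = Lam f + Lam g.
Proof. by rewrite /Lam -big_split; apply: eq_bigr => i _; rewrite GD coefD. Qed.
Lemma LamZ c f : Lam (c *: f) = c * Lam f.
Proof. by rewrite /Lam mulr_sumr; apply: eq_bigr => i _; rewrite GZ coefZ. Qed.
Lemma Lam0 : Lam 0 = 0.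
Proof. by rewrite /Lam big1 // => i _; rewrite G0 coef0. Qed.
Lemma Lam_sum (I : Type) (s : seq I) (h : I -> {mpoly F[k]}) :
  Lam (\sum_(i <- s) h i) = \sum_(i <- s) Lam (h i).
Proof. exact: (big_morph Lam LamD Lam0). Qed.

Lemma PhiX_X c : PhiX v D c = Lam 'X_[c].
Proof.
rewrite /PhiX /Lam; under [RHS]eq_bigr do rewrite coefGE msuppX big_seq1 mcoeffX eqxx mul1r.
case: (mdeg c == D); [by apply: eq_bigr => i _; rewrite mulr1 | by rewrite big1 // => i _; rewrite mulr0].
Qed.

Lemma contract_Phi f m : contract f (PhiX v D) m = Lam ('X_[m] * f).
Proof.
rewrite /contract {3}(mpolyE f) mulr_sumr Lam_sum; apply: eq_bigr => a _.
by rewrite PhiX_X -scalerAr LamZ -mpolyXD addmC.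
Qed.

Lemma contract2 f' f m :
  contract f' (contract f (PhiX v D)) m = Lam (f' * ('X_[m] * f)).
Proof.
rewrite /contract {3}(mpolyE f') mulr_suml Lam_sum; apply: eq_bigr => a _.
rewrite -/(contract f (PhiX v D) (a + m)) contract_Phi -scalerAl LamZ.
by rewrite mpolyXD mulrA.
Qed.

Lemma Lam_J f' u : (0 < r)%N -> in_Jhat v L sep f' -> Lam (f' * u) = 0.
Proof.
move=> r0 [psi hpsi hIX]; have hG := Jhat_G hpsi hIX.
have hD : (D < r)%N = false by apply/negbTE; rewrite -leqNgt; apply/leP; lia.
rewrite /Lam; under eq_bigr do rewrite GM hG mulrAC coefMXn hD coefMr.
rewrite (_ : (D - r).+1 = r); last by lia.
rewrite exchange_big /= big1 // => j _.
rewrite -[RHS](KEY hpsi u (ltn_ord j)); apply: eq_bigr => i _.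
rewrite mulrC; congr (_ * _); congr (_`_ _); lia.
Qed.

Lemma pair_w (N : nat) g (phi : 'X_{1..k} -> F) :
  (forall a, (N <= mdeg a)%N -> g@_a = 0) ->
  \sum_(a <- msupp g) g@_a * phi a = \sum_(b : 'X_{1..k < N}) g@_b * phi b.
Proof.
move=> h; pose I : subFinType _ := 'X_{1..k < N}.
rewrite (ssrcomplements.big_mksub I) ?msupp_uniq //=; last first.
  move=> x xs; rewrite ltnNge; apply/negP => /h /eqP.
  by rewrite mcoeff_eq0 xs.
rewrite big_rmcond //= => j /memN_msupp_eq0 ->; by rewrite mul0r.
Qed.

Definition bsum N d (c : 'X_{1..k < N} -> F) : {mpoly F[k]} :=
  \sum_(b : 'X_{1..k < N} | mdeg b == d) c b *: 'X_[b].
Arguments bsum : clear implicits.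

Lemma bsum_homog N d c : bsum N d c \is d.-homog.
Proof.
apply: rpred_sum => b /eqP hb; apply: rpredZ; apply/dhomogP => m; rewrite msuppX inE => /eqP -> //.
Qed.

Lemma bsum_eval N d c w :
  (bsum N d c).@[w] = \sum_b c b * (if mdeg b == d then ('X_[b]).@[w] else 0).
Proof.
rewrite /bsum rmorph_sum /= big_mkcond /=; apply: eq_bigr => b _.
by case: (mdeg b == d); rewrite ?mulr0 ?mevalZ.
Qed.

Lemma bsum_coef N d c (b : 'X_{1..k < N}) :
  (bsum N d c)@_b = if mdeg b == d then c b else 0.
Proof.
rewrite /bsum raddf_sum /=.
case: ifP => hb.
  rewrite (bigD1 b) //= big1 => [|b' /andP [_ nb]]; last first.
    by rewrite mcoeffZ mcoeffX (inj_eq val_inj) (negbTE nb) mulr0.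
  by rewrite mcoeffZ mcoeffX eqxx mulr1 addr0.
rewrite big1 // => b' /eqP hb'; rewrite mcoeffZ mcoeffX (inj_eq val_inj).
case: eqP => [e|]; last by rewrite mulr0.
by move: hb; rewrite -e hb' eqxx.
Qed.

Lemma bsum_coef_big N d c a : (N <= mdeg a)%N -> (bsum N d c)@_a = 0.
Proof.
move=> ha; rewrite /bsum raddf_sum /= big1 // => b _.
rewrite mcoeffZ mcoeffX; case: eqP => [e|]; last by rewrite mulr0.
by move: (bmdeg b); rewrite e ltnNge ha.
Qed.

Lemma coef_comb (al : F) a (m0 : nat) (be : 'I_m0 -> F) (e : 'I_m0 -> nat) :
  (al%:P * 'X^a * \sum_j (be j)%:P * 'X^(e j))`_D =
  al * \sum_j be j * (a + e j == D)%:R.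
Proof.
rewrite mulr_sumr coef_sum mulr_sumr; apply: eq_bigr => j _.
by rewrite mulrACA -rmorphM -exprD coefCM coefXn mulrA eq_sym.
Qed.

Lemma main : (2 <= n)%N -> dimR_full v r -> (forall d, dimR_full v d -> (r <= d)%N) ->
  (forall g : {mpoly F[k]}, g \is (2 * r).-1.-homog ->
     (in_Jhat v L sep g <-> \sum_(i < n) g.@[v i] = 0))
  /\
  (exists alpha, PhiX v (2 * r).-1 alpha != 0) /\
  (forall psi : 'X_{1..k} -> F,
     (inD psi /\ forall f, in_Jhat v L sep f -> forall m, contract f psi m = 0)
     <-> exists f : {mpoly F[k]}, forall m, psi m = contract f (PhiX v (2 * r).-1) m).
Proof.
move=> n2 hr hmin.
pose i0 : 'I_n := Ordinal (ltnW n2); pose i1 : 'I_n := Ordinal n2.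
have i10 : (i1 == i0) = false by [].
have r0 : (0 < r)%N.
  rewrite lt0n; apply/negP => /eqP r0; move: hr; rewrite r0.
  move=> /(_ (fun j => (j == i0)%:R)) [g hg gv].
  have := homog0_const (v i0) (v i1) hg; rewrite !gv eqxx i10 => /eqP.
  by rewrite oner_eq0.
split.
  move=> g hg; split.
    case=> psi hpsi hIX; have hG := Jhat_G hpsi hIX.
    have e i : g.@[v i] = (psi (sep i))`_(r.-1).
      have := congr1 (fun q : {poly F} => q`_D) (hG i).
      rewrite /= (G_homog _ hg) coefCM coefXn eqxx mulr1 coefMXn.
      have -> : (D < r)%N = false by apply/negbTE; rewrite -leqNgt; apply/leP; lia.
      by have -> : (D - r = r.-1)%N by lia.
    rewrite (eq_bigr _ (fun i _ => e i)).
    have := KEY hpsi 1 r0.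
    move=> h; rewrite -[RHS]h; apply: eq_bigr => i _; by rewrite G1 coef1 mul1r subn0.
  move=> hs; apply: (CONS (x := fun i => g.@[v i]) (s := 1) (o := 0)) => //.
    move=> f _; under eq_bigr do rewrite coefG0.
    by rewrite -mulr_suml hs mul0r.
  by rewrite addn0 subn1.
split.
  have rD : (r <= D)%N by lia.
  have [g hg gv] := dimR_up hr rD (fun j => (j == i0)%:R).
  have hs : \sum_i g.@[v i] = 1.
    rewrite (bigD1 i0) //= big1 => [|j nj]; first by rewrite gv eqxx addr0.
    by rewrite gv (negbTE nj).
  have hs2 : \sum_i g.@[v i] = \sum_(m <- msupp g) g@_m * PhiX v D m.
    under eq_bigr do rewrite mevalE.
    rewrite exchange_big /= big_seq [RHS]big_seq; apply: eq_bigr => m hm.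
    rewrite /PhiX (dhomog_mf hg hm) eqxx mulr_sumr; apply: eq_bigr => i _.
    by rewrite mevalX.
  case hh : (has (fun m => PhiX v D m != 0) (msupp g)).
    by case/hasP: hh => m _ h; exists m.
  exfalso; move/hasPn: hh => hh.
  have : \sum_(m <- msupp g) g@_m * PhiX v D m = 0.
    rewrite big_seq big1 // => m hm; have := hh m hm; rewrite negbK => /eqP ->.
    by rewrite mulr0.
  by rewrite -hs2 hs => /eqP; rewrite oner_eq0.
move=> psi; split; last first.
  case=> f hf; split.
    exists (map val (enum {: 'X_{1..k < D.+1}})) => m; rewrite hf => hm.
    have hmD : (mdeg m < D.+1)%N.
      rewrite ltnNge; apply/negP => hh; move: hm; rewrite /contract big1 ?eqxx //.
      move=> a _; rewrite /PhiX mdegD.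
      have -> : (mdeg a + mdeg m == D) = false by apply/negbTE/eqP; lia.
      by rewrite mulr0.
    apply/mapP; exists (BMultinom hmD) => //; by rewrite mem_enum.
  move=> f' hf' m.
  have -> : contract f' psi m = contract f' (contract f (PhiX v D)) m.
    by apply: eq_bigr => a _; rewrite hf.
  by rewrite contract2 Lam_J.
case=> hD hJ.
have ps0 m : (2 * r <= mdeg m)%N -> psi m = 0.
  move=> hm; have hX : in_Jhat v L sep 'X_[m].
    apply: (CONS (x := fun i => ('X_[m]).@[v i]) (s := 0) (o := mdeg m - 2 * r)) => //.
    by rewrite dhomogX subn0 subnKC.
  have := hJ _ hX 0%MM; rewrite /contract msuppX big_seq1 mcoeffX eqxx mul1r addm0.
  by [].
have hJ0 : forall g, in_IX v g -> in_Jhat v L sep g.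
  move=> g hg; exists (fun _ => 0).
    split => //; by [move=> *; rewrite addr0 | move=> *; rewrite scaler0 | move=> *; rewrite mulr0].
  rewrite big1 ?subr0 // => i _; by rewrite /evalL size_poly0 big_ord0 mul0r.
have step1 j : exists w : 'I_n -> F, forall m, mdeg m = j ->
    psi m = \sum_i w i * ('X_[m]).@[v i].
  have [|w hw] := LAf (A := fun i (b : 'X_{1..k < j.+1}) => if mdeg b == j then ('X_[b]).@[v i] else 0)
      (u := fun b => if mdeg b == j then psi b else 0).
    move=> c hc; pose g := bsum j.+1 j c.
    have gIX : in_IX v g.
      apply/in_IX_G => i; rewrite (G_homog _ (bsum_homog _ _)) bsum_eval.
      by rewrite (hc i) rmorph0 mul0r.
    have := hJ _ (hJ0 _ gIX) 0%MM.
    rewrite /contract (pair_w (N := j.+1)); last by move=> a; apply: bsum_coef_big.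
    move=> e; rewrite -[RHS]e; apply: eq_bigr => b _; rewrite bsum_coef addm0.
    by case: ifP; rewrite ?mulr0 ?mul0r.
  exists w => m hm; have hb : (mdeg m < j.+1)%N by rewrite hm.
  have := hw (BMultinom hb); rewrite /= hm eqxx => ->.
  have := hw (BMultinom hb); rewrite (_ : bmnm (BMultinom hb) = m) // hm eqxx => ->.
have step (j : 'I_(2 * r)) : exists fj : {mpoly F[k]}, fj \is (D - j).-homog /\
    forall m, mdeg m = j -> psi m = \sum_i ('X_[m]).@[v i] * fj.@[v i].
  have [w hw] := step1 j.
  suff [fj hfj fjv] : exists2 fj : {mpoly F[k]}, fj \is (D - j).-homog & forall i, fj.@[v i] = w i.
    exists fj; split => // m hm; rewrite hw //; apply: eq_bigr => i _; by rewrite fjv mulrC.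
  have jD : (j <= D)%N by have := ltn_ord j; lia.
  case: (ltnP j r) => jr.
    have [|fj h1 h2] := dimR_up hr (_ : r <= D - j)%N w; first by lia.
    by exists fj.
  set d := (D - j)%N.
  have [|c hc] := LAf (A := fun (b : 'X_{1..k < d.+1}) i => if mdeg b == d then ('X_[b]).@[v i] else 0)
      (u := w).
    move=> x hx.
    have [g hg gx] := dimR_up hr jr x.
    have gJ : in_Jhat v L sep g.
      apply: (CONS (x := x) (s := d.+1) (o := 0)) => //.
      - by rewrite /d; lia.
      - move=> f _ /=; under eq_bigr do rewrite coefGE mulr_sumr.
        rewrite exchange_big /= big1 // => m _.
        case: (eqVneq (mdeg m) d) => hm; last first.
          by rewrite big1 // => i _; rewrite !mulr0.
        have hb : (mdeg m < d.+1)%N by rewrite hm.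
        have := hx (BMultinom hb); rewrite (_ : bmnm (BMultinom hb) = m) // hm eqxx => e.
        transitivity (f@_m * \sum_i x i * ('X_[m]).@[v i]); last by rewrite e mulr0.
        rewrite mulr_sumr; apply: eq_bigr => i _.
        by rewrite mulr1 mulrCA.
      - by rewrite addn0; have -> : (2 * r - d.+1 = j)%N by rewrite /d; lia.
    have := hJ _ gJ 0%MM; rewrite /contract => e; rewrite -[RHS]e.
    rewrite [RHS]big_seq; under [RHS]eq_bigr => a ha do rewrite addm0 (hw a (dhomog_mf hg ha)).
    rewrite -[RHS]big_seq; under [RHS]eq_bigr do rewrite mulr_sumr.
    rewrite [RHS]exchange_big /=; apply: eq_bigr => i _; rewrite -gx mevalE mulr_suml.
    by apply: eq_bigr => a _; rewrite mevalX mulrAC mulrA.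
  exists (bsum d.+1 d c); first exact: bsum_homog.
  by move=> i; rewrite bsum_eval hc.
have [Fj hFj] := fin_all_exists step.
exists (\sum_j Fj j) => m; rewrite contract_Phi /Lam.
have hXm : ('X_[m] : {mpoly F[k]}) \is (mdeg m).-homog by rewrite dhomogX.
under eq_bigr do rewrite GM G_sum (G_homog _ hXm).
under eq_bigr do under eq_bigr do rewrite (G_homog _ (hFj _).1).
under eq_bigr do rewrite coef_comb.
case: (ltnP (mdeg m) (2 * r)) => hm; last first.
  rewrite ps0 // big1 // => i _; rewrite big1 ?mulr0 // => j _.
  have -> : (mdeg m + (D - j) == D)%N = false by apply/negbTE/eqP; have := ltn_ord j; lia.
  by rewrite mulr0.
pose j0 : 'I_(2 * r) := Ordinal hm.
rewrite ((hFj j0).2 m erefl); apply: eq_bigr => i _.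
rewrite (bigD1 j0) //= big1 => [|j nj]; last first.
  have -> : (mdeg m + (D - j) == D)%N = false.
    apply/negbTE/eqP => e; move: nj; rewrite -(inj_eq val_inj) /=.
    have := ltn_ord j; move/eqP: e; lia.
  by rewrite mulr0.
have -> : (mdeg m + (D - j0) == D)%N by apply/eqP => /=; lia.
by rewrite mulr1 addr0.
Qed.

End Main.
End G.

Theorem theorem7p5 (F : finFieldType) (k n : nat) (v : 'I_n -> 'I_k -> F)
    (L : {mpoly F[k]}) (r : nat) (sep : 'I_n -> {mpoly F[k]}) :
  (2 <= n)%N ->
  injective v ->
  L \is 1.-homog ->
  (forall i, L.@[v i] = 1) ->
  dimR_full v r -> (forall d, dimR_full v d -> (r <= d)%N) ->
  (forall i, sep i \is r.-homog) ->
  (forall i j, (sep i).@[v j] = (i == j)%:R) ->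
  (* (a) *)
  (forall g : {mpoly F[k]}, g \is (2 * r).-1.-homog ->
     (in_Jhat v L sep g <-> \sum_(i < n) g.@[v i] = 0))
  /\
  (* (b) *)
  (exists alpha, PhiX v (2 * r).-1 alpha != 0) /\
  (forall psi : 'X_{1..k} -> F,
     (inD psi /\ forall f, in_Jhat v L sep f -> forall m, contract f psi m = 0)
     <-> exists f : {mpoly F[k]}, forall m, psi m = contract f (PhiX v (2 * r).-1) m).
Proof.
move=> n2 _ hL hLv hr hmin hsep hsepv.
exact: (main hL hLv hsep hsepv n2 hr hmin).
Qed.
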